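(* Let $n$ be a positive even integer and let $\pi$ be chosen uniformly at random from the permutations of $[n]$ all of whose cycle lengths are even. For a positive integer $k\le n$, let $Y_k$ be the number of elements of $[n]$ lying in $k$-cycles of $\pi$. Then \[ \mathbb{E}_e^{(n)}Y_k=\frac{n(n-2)\cdots(n-k+2)}{(n-1)(n-3)\cdots(n-k+1)} \] if $k$ is even, and $\mathbb{E}_e^{(n)}Y_k=0$ if $k$ is odd.
   Context: $\mathbb{E}_e^{(n)}$ denotes expectation under the uniform measure on permutations of $[n]$ with all cycle lengths even. $Y_k=kX_k$, where $X_k$ is the number of $k$-cycles. *)

(* Defs.v *)
From mathcomp Require Import all_boot all_order all_algebra all_fingroup.
Unset Printing Implicit Defensive.
Import GRing.Theory Num.Theory.

Definition cycle_len (n : nat) (s : {perm 'I_n}) (x : 'I_n) : nat :=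
  #|porbit s x|.

Definition all_cycles_even (n : nat) (s : {perm 'I_n}) : bool :=
  [forall x, ~~ odd (cycle_len n s x)].

Definition even_perms (n : nat) : {set {perm 'I_n}} :=
  [set s | all_cycles_even n s].

Definition Y (n k : nat) (s : {perm 'I_n}) : nat :=
  #|[set x | cycle_len n s x == k]|.

Definition Ee (n : nat) (f : {perm 'I_n} -> nat) : rat :=
  ((\sum_(s in even_perms n) f s)%:R / (#|even_perms n|)%:R)%R.

(* Main.v *)
Require Import Defs.
From mathcomp Require Import all_boot all_order all_algebra all_fingroup.
Import GRing.Theory Num.Theory.
From mathcomp Require Import zify ring.

Fixpoint F (m : nat) : nat :=
  match m with 0 => 1 | 1 => 0 | m'.+2 => m'.+1 * m'.+1 * F m' end.

Definition Tsum n := \sum_(0 <= j < n.+1) odd j * n ^_ j * F (n - j).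

Lemma TsumSS n : Tsum n.+2 = n.+2 * F n.+1 + n.+2 * n.+1 * Tsum n.
Proof.
rewrite /Tsum big_nat_recl // big_nat_recl //.
rewrite (_ : odd 0 = false) // (_ : odd 1 = true) // mul0n add0n.
rewrite ffactn1 mul1n (_ : n.+2 - 1 = n.+1) //; congr (_ + _).
rewrite big_distrr; apply: eq_bigr => i _.
rewrite !oddS negbK !ffactSS !subSS /=; move: (odd i : nat) (n ^_ i) (F (n - i)) => a b c; nia.
Qed.

Lemma Tsum_F n : Tsum n = F n.+1.
Proof.
suff: Tsum n = F n.+1 /\ Tsum n.+1 = F n.+2 by case.
elim: n => [|n [IH1 IH2]].
  by rewrite /Tsum !big_nat_recl // !big_geq.
split => //; rewrite TsumSS IH1 /=; lia.
Qed.

Section Orb.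
Variable T : finType.
Implicit Types (s : {perm T}) (A B : {set T}) (x y z : T).

Lemma porbit_sub s B x : x \in B -> (forall z, z \in B -> s z \in B) ->
  porbit s x \subset B.
Proof.
move=> xB cl; apply/subsetP => z /porbitP [i ->].
elim: i => [|i IH]; first by rewrite expg0 perm1.
by rewrite expgSr permM; apply: cl.
Qed.

Lemma porbit_s1 s z : s z \in porbit s z.
Proof. by have := mem_porbit s 1 z; rewrite expg1. Qed.

Lemma porbit_step s x z : z \in porbit s x -> s z \in porbit s x.
Proof. by rewrite -eq_porbit_mem => /eqP <-; apply: porbit_s1. Qed.

Lemma porbit_trans s x z w : z \in porbit s x -> w \in porbit s z -> w \in porbit s x.
Proof. by rewrite -eq_porbit_mem => /eqP ->. Qed.

Lemma porbit_fix s x : s x = x -> porbit s x = [set x].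
Proof.
move=> sx; apply/eqP; rewrite eqEsubset porbit_sub ?inE //=.
  by rewrite sub1set porbit_id.
by move=> z; rewrite inE => /eqP ->; rewrite sx inE.
Qed.

Lemma card_porbit1 s x : (#|porbit s x| == 1) = (s x == x).
Proof.
apply/idP/eqP => [/cards1P [a ha]|/porbit_fix ->]; last by rewrite cards1.
have h1 := porbit_id s x; have h2 := porbit_step _ _ _ h1.
by move: h1 h2; rewrite ha !inE => /eqP -> /eqP ->.
Qed.

Section Decomp.
Variables (s' : {perm T}) (x y : T).
Hypotheses (sx : s' x = x) (nxy : x != y).
Variable s : {perm T}.
Hypothesis hs : s = (s' * tperm x y)%g.

Lemma sE z : s z = tperm x y (s' z). Proof. by rewrite hs permM. Qed.
Lemma s'E z : s' z = tperm x y (s z). Proof. by rewrite sE tpermK. Qed.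

Lemma dec_notin : x \notin porbit s' y.
Proof.
apply/negP => /(porbit_trans _ _ _ _ (porbit_id s' y)) h.
rewrite porbit_sym porbit_fix // inE in h.
by move: nxy; rewrite eq_sym (eqP h) eqxx.
Qed.

Lemma sx_y : s x = y. Proof. by rewrite sE sx  tpermL. Qed.

Lemma dec_orbit : porbit s x = x |: porbit s' y.
Proof.
apply/eqP; rewrite eqEsubset; apply/andP; split.
  apply: porbit_sub; first by rewrite setU11.
  move=> z /setU1P [->|hz].
    by rewrite sx_y inE porbit_id orbT.
  rewrite sE ; case: tpermP => [_|_|_ _]; apply/setU1P;
    [right; exact: porbit_id | left; done | right; exact: porbit_step hz].
have yin : y \in porbit s x.
  by rewrite -sx_y porbit_s1.
apply/subsetP => w /setU1P [->|hw]; first exact: porbit_id.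
move: w hw; apply/subsetP.
apply: porbit_sub => // z hz; rewrite s'E .
case: tpermP => [_|_|_ _] //; first exact: porbit_id.
exact: porbit_step.
Qed.

Lemma dec_other z : z \notin porbit s x -> porbit s z = porbit s' z.
Proof.
rewrite dec_orbit in_setU1 negb_or => /andP [zx zy].
have nx' : x \notin porbit s' z.
  apply/negP; rewrite porbit_sym (porbit_fix _ _ sx) => /set1P h.
  by rewrite h eqxx in zx.
have ny' : y \notin porbit s' z.
  by apply/negP; rewrite porbit_sym => h; rewrite h in zy.
have yin : y \in porbit s x.
  by rewrite -sx_y porbit_s1.
have nx : x \notin porbit s z.
  by apply/negP; rewrite porbit_sym dec_orbit in_setU1 (negbTE zx) (negbTE zy).
have ny : y \notin porbit s z.
  apply/negP; rewrite porbit_sym => h.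
  by move: (porbit_trans _ _ _ _ yin h); rewrite dec_orbit in_setU1 (negbTE zx) (negbTE zy).
apply/eqP; rewrite eqEsubset; apply/andP; split.
  apply: porbit_sub; first exact: porbit_id.
  move=> w hw; rewrite sE  tpermD //.
    by apply: porbit_step.
    by apply: contraNneq nx' => ->; apply: porbit_step.
  by apply: contraNneq ny' => ->; apply: porbit_step.
apply: porbit_sub; first exact: porbit_id.
move=> w hw; rewrite s'E  tpermD //.
  by apply: porbit_step.
  by apply: contraNneq nx => ->; apply: porbit_step.
by apply: contraNneq ny => ->; apply: porbit_step.
Qed.
End Decomp.

Definition oe A s x := [forall z in A, (z \notin porbit s x) ==> ~~ odd #|porbit s z|].
Definition Gs A x k := [set s : {perm T} | perm_on A s && (#|porbit s x| == k) && oe A s x].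
Definition Es A := [set s : {perm T} | perm_on A s && [forall z in A, ~~ odd #|porbit s z|]].

Lemma perm_onS' A B s : A \subset B -> perm_on A s -> perm_on B s.
Proof. by move=> AB h; apply: subset_trans h AB. Qed.

Lemma perm_onD1 A s x : perm_on (A :\ x) s = perm_on A s && (s x == x).
Proof.
apply/idP/andP => [h|[h sx]].
  split; first exact: perm_onS' (subsetDl _ _) h.
  by rewrite (out_perm h) // setD11.
apply/subsetP => z; rewrite inE => hz; rewrite in_setD1 (subsetP h) // andbT.
by apply: contraNneq hz => ->.
Qed.

Lemma porbit_subA A s x : perm_on A s -> x \in A -> porbit s x \subset A.
Proof. by move=> h xA; apply: porbit_sub => // z zA; rewrite perm_closed. Qed.

Lemma G1 A x : x \in A -> Gs A x 1 = Es (A :\ x).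
Proof.
move=> xA; apply/setP => s; rewrite !inE card_porbit1 perm_onD1.
case sx: (s x == x); rewrite ?andbF ?andbT //=.
have pf := porbit_fix _ _ (eqP sx).
case: (perm_on A s) => //=; rewrite /oe pf.
apply/forallP/forallP => h z; apply/implyP.
  move=> /setD1P [zx zA]; have := h z; rewrite zA /=.
  by rewrite in_set1 zx.
move=> zA; apply/implyP; rewrite in_set1 => zx.
by have := h z; rewrite in_setD1 zx zA.
Qed.

Lemma key A x y k s' : x \in A -> y \in A :\ x -> s' x = x ->
  ((s' * tperm x y)%g \in Gs A x k.+2) = (s' \in Gs (A :\ x) y k.+1).
Proof.
move=> xA /setD1P [yx yA] sx.
have nxy : x != y by rewrite eq_sym.
set s := (s' * tperm x y)%g; have hs : s = (s' * tperm x y)%g by [].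
have dO := dec_orbit _ _ _ sx _ hs.
have dN := dec_notin _ _ _ sx nxy.
have dT := dec_other _ _ _ sx _ hs.
rewrite !inE perm_onD1 sx eqxx andbT.
have tA : perm_on A (tperm x y).
  by apply: perm_onS' (tperm_on x y); apply/subsetP => w /set2P [->|->].
have -> : perm_on A s = perm_on A s'.
  apply/idP/idP => h; last exact: perm_onM.
  have -> : s' = (s * tperm x y)%g by rewrite hs -mulgA tperm2 mulg1.
  exact: perm_onM.
rewrite dO cardsU1 dN add1n eqSS.
congr (_ && _); rewrite /oe.
apply/forallP/forallP => h z; apply/implyP.
  move=> /setD1P [zx zA]; apply/implyP => zn.
  have zn' : z \notin porbit s x by rewrite dO in_setU1 negb_or zx.
  by have := h z; rewrite zA zn' /= dT.
move=> zA; apply/implyP => zn.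
move: zn; rewrite dO in_setU1 negb_or => /andP [zx zy].
have zn' : z \notin porbit s x by rewrite dO in_setU1 negb_or zx.
by have := h z; rewrite in_setD1 zx zA zy /= dT.
Qed.

Lemma Grec A x k : x \in A ->
  #|Gs A x k.+2| = \sum_(y in A :\ x) #|Gs (A :\ x) y k.+1|.
Proof.
move=> xA; rewrite -sum1_card (partition_big (fun s => s x) (mem (A :\ x))).
  apply: eq_bigr => y hy.
  rewrite sum1dep_card.
  have -> : Gs (A :\ x) y k.+1 =
     [set (s * tperm x y)%g | s in [set s | (s \in Gs A x k.+2) && (s x == y)]].
    apply/setP => s'; apply/idP/imsetP.
      move=> h; have sx : s' x = x.
        by move: h; rewrite inE => /andP [/andP [h _] _]; rewrite (out_perm h) // setD11.
      exists (s' * tperm x y)%g; last by rewrite -mulgA tperm2 mulg1.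
      rewrite inE key // h /= permM sx tpermL //.
    move=> [s]; rewrite inE => /andP [hs /eqP sxy] ->.
    have sx : (s * tperm x y)%g x = x by rewrite permM sxy tpermR.
    rewrite -key // -mulgA tperm2 mulg1 //.
  by rewrite card_imset //; apply: mulIg.
move=> s; rewrite inE => /andP [/andP [h /eqP hc] _].
apply/setD1P; split; last by rewrite perm_closed.
by rewrite -card_porbit1 hc.
Qed.

Lemma Es_split A x s : x \in A -> (s \in Es A) =
  [&& perm_on A s, oe A s x & ~~ odd #|porbit s x|].
Proof.
move=> xA; rewrite inE; case: (perm_on A s) => //=.
apply/forallP/andP => [h|[h1 h2] z].
  split; last by have := h x; rewrite xA.
  by apply/forallP => z; apply/implyP => zA; apply/implyP => _; have := h z; rewrite zA.
apply/implyP => zA.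
case zp: (z \in porbit s x).
  by move: zp; rewrite -eq_porbit_mem => /eqP ->.
by have := forallP h1 z; rewrite zA zp.
Qed.

Lemma E_part A x : x \in A ->
  #|Es A| = \sum_(k < #|A|.+1) (~~ odd k) * #|Gs A x k|.
Proof.
move=> xA; rewrite -sum1_card (partition_big (fun s => (inord #|porbit s x| : 'I_#|A|.+1)) xpredT) //.
apply: eq_bigr => k _; rewrite sum1dep_card.
have cE s : s \in Es A -> (inord #|porbit s x| == k :> 'I_#|A|.+1) = (#|porbit s x| == k).
  rewrite (Es_split _ _ s xA) => /andP [h _].
  have le : #|porbit s x| < #|A|.+1 by rewrite ltnS subset_leq_card // porbit_subA.
  by rewrite -val_eqE /= inordK.
case: (boolP (odd k)) => ok /=.
  rewrite mul0n; apply/eqP; rewrite cards_eq0; apply/eqP/setP => s; rewrite in_set0 in_set.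
  apply/negP => /andP [hE hk]; move: hk; rewrite cE // => /eqP hk.
  by move: hE; rewrite (Es_split _ _ s xA) hk ok !andbF.
rewrite mul1n; apply: eq_card => s; rewrite [in LHS]in_set.
case hE: (s \in Es A); rewrite /=.
  rewrite cE // [s \in Gs _ _ _]inE; move: hE; rewrite (Es_split _ _ s xA) => /and3P [h1 h2 h3].
  by rewrite h1 h2 andbT.
apply/esym/negP; rewrite inE => /andP [/andP [h1 /eqP hk] h2].
by move: hE; rewrite (Es_split _ _ s xA) h1 h2 hk ok.
Qed.

Lemma E0 : #|Es set0| = 1.
Proof.
have -> : Es set0 = [set 1%g].
  apply/setP => s; rewrite !inE.
  apply/idP/idP => [/andP [h _]|/eqP ->].
    by rewrite (perm_on_id h) ?cards0.
  by rewrite perm_on1; apply/forallP => z; rewrite inE.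
by rewrite cards1.
Qed.

Lemma G0 A x : #|Gs A x 0| = 0.
Proof.
apply/eqP; rewrite cards_eq0; apply/eqP/setP => s; rewrite !inE.
by rewrite (negbTE (card_porbit_neq0 _ _)) andbF.
Qed.

Lemma Gform A x k : (forall B : {set T}, #|B| < #|A| -> #|Es B| = F #|B|) ->
  x \in A -> #|Gs A x k.+1| = (#|A|.-1) ^_ k * F (#|A| - k.+1).
Proof.
elim: k A x => [|k IH] A x hE xA.
  rewrite G1 // hE; last by rewrite (cardsD1 x A) xA.
  by rewrite ffactn0 mul1n (cardsD1 x A) xA add1n subn1.
rewrite Grec //.
have hA : #|A| = #|A :\ x|.+1 by rewrite (cardsD1 x A) xA add1n.
rewrite (eq_bigr (fun _ => (#|A :\ x|.-1) ^_ k * F (#|A :\ x| - k.+1))); last first.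
  move=> y hy; apply: IH => // B hB; apply: hE; rewrite hA; exact: ltn_trans hB _.
rewrite sum_nat_const hA /= subSS.
by case: #|A :\ x| => [|a] //=; rewrite ffactSS mulnA.
Qed.

Lemma Eform m (A : {set T}) : #|A| = m -> #|Es A| = F m.
Proof.
elim/ltn_ind: m A => m IH A hA.
case: m IH hA => [|p] IH hA.
  by move/eqP: hA; rewrite cards_eq0 => /eqP ->; rewrite E0.
have : 0 < #|A| by rewrite hA.
rewrite card_gt0 => /set0Pn [x xA].
rewrite (E_part _ _ xA) big_ord_recl G0 muln0 add0n.
rewrite -Tsum_F /Tsum -(big_mkord xpredT (fun i => ~~ odd i.+1 * #|Gs A x i.+1|)).
rewrite hA. apply: eq_bigr => i _; rewrite Gform ?hA //=; first by rewrite negbK mulnA.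
by move=> B hB; apply: IH => //; rewrite -hA.
Qed.

Lemma Ecount A x k : x \in A ->
  #|[set s | (s \in Es A) && (#|porbit s x| == k)]| = ~~ odd k * #|Gs A x k|.
Proof.
move=> xA; case: (boolP (odd k)) => ok /=.
  rewrite mul0n; apply/eqP; rewrite cards_eq0; apply/eqP/setP => s; rewrite in_set0 in_set.
  apply/negP => /andP [hE /eqP hk].
  by move: hE; rewrite (Es_split _ _ s xA) hk ok !andbF.
rewrite mul1n; apply: eq_card => s; rewrite [in LHS]in_set.
case hE: (s \in Es A); rewrite /=.
  rewrite [s \in Gs _ _ _]inE; move: hE; rewrite (Es_split _ _ s xA) => /and3P [h1 h2 h3].
  by rewrite h1 h2 andbT.
apply/esym/negP; rewrite inE => /andP [/andP [h1 /eqP hk] h2].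
by move: hE; rewrite (Es_split _ _ s xA) h1 h2 hk ok.
Qed.

End Orb.

Lemma ffact_pairs n j : n ^_ (j.*2) = \prod_(i < j) ((n - 2 * i) * (n - 1 - 2 * i)).
Proof.
elim: j => [|j IH]; first by rewrite big_ord0 ffactn0.
rewrite big_ord_recr /= -IH doubleS !ffactnSr -mulnA; congr (_ * (_ * _)); lia.
Qed.

Lemma Fprod n j : j.*2 <= n ->
  F n = F (n - j.*2) * \prod_(i < j) ((n - 1 - 2 * i) * (n - 1 - 2 * i)).
Proof.
elim: j => [|j IH] h; first by rewrite big_ord0 subn0 muln1.
rewrite big_ord_recr /= IH; last by move: h; rewrite doubleS; lia.
have e : n - j.*2 = (n - (j.+1).*2).+2 by move: h; rewrite doubleS; lia.
rewrite e /= (_ : (n - (j.+1).*2).+1 = n - 1 - 2 * j); last by move: h; rewrite doubleS; lia.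
set P := \prod_(i < j) _; set m := n - 1 - 2 * j; set f := F _.
move: P m f => P m f; nia.
Qed.

Lemma Fpos n : ~~ odd n -> 0 < F n.
Proof.
suff: (~~ odd n -> 0 < F n) /\ (~~ odd n.+1 -> 0 < F n.+1) by case.
elim: n => [|n [IH1 IH2]]; first by split.
split => // h; rewrite /= !muln_gt0 /=; apply: IH1.
by move: h; rewrite !oddS negbK.
Qed.


Local Open Scope ring_scope.

Theorem proposition3p1 (n k : nat) :
  (0 < n)%N -> ~~ odd n -> (0 < k)%N -> (k <= n)%N ->
  Ee n (Y n k) =
    (if ~~ odd k then
       (\prod_(i < k./2) (n - 2 * i)%N%:R) / (\prod_(i < k./2) (n - 1 - 2 * i)%N%:R)
     else 0).
Proof.
move=> n0 ne k0 kn.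
set TT := [set: 'I_n].
have hE : even_perms n = Es _ TT.
  apply/setP => s; rewrite [in LHS]inE [in RHS]inE /all_cycles_even /cycle_len.
  have -> : perm_on TT s by apply/subsetP => z _; exact: in_setT.
  apply/forallP/forallP => h z; first by rewrite in_setT h.
  by have := h z; rewrite in_setT.
have cardE : #|even_perms n| = F n by rewrite hE (Eform _ n) // cardsT card_ord.
have Gk x : #|Gs _ TT x k| = (n.-1 ^_ k.-1 * F (n - k))%N.
  case: (k) k0 kn => // k' _ kn'.
  by rewrite (Gform _ _ _ k' (fun B _ => Eform _ _ B erefl) (in_setT x)) cardsT card_ord.
have hsum : (\sum_(s in even_perms n) Y n k s = n * (~~ odd k * (n.-1 ^_ k.-1 * F (n - k))))%N.
  rewrite /Y /cycle_len.
  rewrite (eq_bigr (fun s => \sum_(x : 'I_n) (#|porbit s x| == k : nat))%N); last first.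
    move=> s _; rewrite -sum1dep_card big_mkcond; apply: eq_bigr => x _.
    by case: (_ == _).
  rewrite exchange_big /=.
  rewrite (eq_bigr (fun x => ~~ odd k * (n.-1 ^_ k.-1 * F (n - k)))%N).
    by rewrite sum_nat_const card_ord.
  move=> x _; rewrite -(Gk x) -(Ecount _ _ _ _ (in_setT x)) -sum1dep_card hE.
  rewrite [LHS]big_mkcond [RHS]big_mkcond; apply: eq_bigr => s _.
  by case: (s \in Es _ TT); case: (_ == k).
rewrite /Ee hsum cardE.
case: ifP => hk; last by rewrite mul0n muln0 mul0r.
set j := k./2.
have kE : k = j.*2 by rewrite -[k in LHS]odd_double_half (negbTE hk).
have jn : (j.*2 <= n)%N by rewrite -kE.
rewrite -!natr_prod.
apply/eqP; rewrite eqr_div; first last.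
- rewrite pnatr_eq0 -lt0n prodn_gt0 // => i.
  have := ltn_ord i; move: jn; rewrite -muln2; move: (nat_of_ord i) => i0 h1 h2; lia.
- by rewrite pnatr_eq0 -lt0n Fpos.
rewrite -!natrM eqr_nat; apply/eqP.
have ff m l : (0 < m)%N -> (0 < l)%N -> (m * m.-1 ^_ l.-1 = m ^_ l)%N.
  by case: m => // m; case: l => // l; rewrite ffactSS.
rewrite mul1n mulnA ff // kE ffact_pairs (Fprod n j) // big_split /=.
set P0 := \prod_(i < j) _; set P1 := \prod_(i < j) _; set P2 := \prod_(i < j) _.
set f := F _.
rewrite /P2 big_split /= -/P1; change ((P1 * P1)%R) with (P1 * P1)%N; move: P0 P1 f => a b d; rewrite mulnAC mulnA mulnAC -!mulnA; by congr (_ * _); rewrite mulnCA.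
Qed.
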